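(* Let $X$ be a topological space and let $r:X\to A$ be a retraction onto a subspace $A\subseteq X$. Let $m\in A$ and $l\in X$. Then: (a) If the man has a strategy in $A$ for starting points $m$ (man) and $r(l)$ (lion), then the man has a strategy in $X$ for starting points $m$ (man) and $l$ (lion). (b) If the lion has a strategy in $X$ for starting points $m$ (man) and $l$ (lion), then the lion has a strategy in $A$ for starting points $m$ (man) and $r(l)$ (lion).
   Context: For a topological space $X$ and $x\in X$, let $P_x(X)$ be the set of continuous maps $\gamma:[0,+\infty)\to X$ with $\gamma(0)=x$. For $\gamma\in P_x(X)$ and $t\ge 0$, write $\gamma_{<t}=\gamma|_{[0,t)}$ and $\gamma_{\le t}=\gamma|_{[0,t]}$. Given starting points $m$ (man) and $l$ (lion) in a space $X$: a strategy for the man is a function $S:P_l(X)\to P_m(X)$ such that (i) $S(\beta)(t)\neq\beta(t)$ for all $\beta\in P_l(X)$ and $t\ge0$, and (ii) whenever $\beta,\beta'\in P_l(X)$ and $t\ge0$ satisfy $\beta_{<t}=\beta'_{<t}$, then $S(\beta)_{\le t}=S(\beta')_{\le t}$. A strategy for the lion is a function $S:P_m(X)\to P_l(X)$ such that (i) for each $\alpha\in P_m(X)$ there exists $t\ge 0$ with $S(\alpha)(t)=\alpha(t)$, and (ii) whenever $\alpha,\alpha'\in P_m(X)$ and $t\ge0$ satisfy $\alpha_{<t}=\alpha'_{<t}$, then $S(\alpha)_{\le t}=S(\alpha')_{\le t}$. A retraction $r:X\to A$ is a continuous map with $r(a)=a$ for all $a\in A$. *)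

(* Defs.v *)
From HB Require Import structures.
From mathcomp Require Import all_boot all_order all_algebra.
From mathcomp Require Import all_classical all_reals all_analysis.
Set Implicit Arguments. Unset Strict Implicit. Unset Printing Implicit Defensive.
Import Order.TTheory GRing.Theory Num.Theory numFieldNormedType.Exports.
Local Open Scope classical_set_scope.
Local Open Scope ring_scope.

(* Time is [0, +oo) inside a realType R.  A path is represented by a function
   R -> X; only its values on [0, +oo) matter. *)
Definition time (R : realType) : set R := [set t | 0 <= t].

(* gamma is an element of P_x(A): continuous on [0,+oo), starts at x,
   takes values in the subspace A (continuity into the subspace A is the
   same as continuity into X with image in A). *)
Definition path_in (R : realType) (X : topologicalType) (A : set X) (x : X)
  (g : R -> X) : Prop :=
  g 0 = x /\ {within @time R, continuous g} /\ (forall t, 0 <= t -> A (g t)).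

Definition causal (R : realType) (X : topologicalType) (A : set X) (x : X)
  (S : (R -> X) -> (R -> X)) : Prop :=
  forall b b' : R -> X, forall t : R, path_in A x b -> path_in A x b' -> 0 <= t ->
    (forall s, 0 <= s -> s < t -> b s = b' s) ->
    (forall s, 0 <= s -> s <= t -> S b s = S b' s).

Definition man_strategy (R : realType) (X : topologicalType) (A : set X)
  (m l : X) (S : (R -> X) -> (R -> X)) : Prop :=
  (forall b, path_in A l b -> path_in A m (S b)) /\
  (forall b, path_in A l b -> forall t, 0 <= t -> S b t <> b t) /\
  causal A l S.

Definition man_wins (R : realType) (X : topologicalType) (A : set X) (m l : X) : Prop :=
  exists S : (R -> X) -> (R -> X), man_strategy A m l S.

Definition lion_strategy (R : realType) (X : topologicalType) (A : set X)
  (m l : X) (S : (R -> X) -> (R -> X)) : Prop :=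
  (forall a, path_in A m a -> path_in A l (S a)) /\
  (forall a, path_in A m a -> exists t, 0 <= t /\ S a t = a t) /\
  causal A m S.

Definition lion_wins (R : realType) (X : topologicalType) (A : set X) (m l : X) : Prop :=
  exists S : (R -> X) -> (R -> X), lion_strategy A m l S.

(* r : X -> A is a retraction onto A, viewed as a map X -> X. *)
Definition retraction (X : topologicalType) (A : set X) (r : X -> X) : Prop :=
  continuous r /\ (forall x, A (r x)) /\ (forall a, A a -> r a = a).

(* Main.v *)
Require Import Defs.
From HB Require Import structures.
From mathcomp Require Import all_boot all_order all_algebra.
From mathcomp Require Import all_classical all_reals all_analysis.
Import Order.TTheory GRing.Theory Num.Theory numFieldNormedType.Exports.
Local Open Scope classical_set_scope.
Local Open Scope ring_scope.

Lemma wc (R : realType) (X : topologicalType) (r : X -> X) (g : R -> X) (D : set R) :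
  continuous r -> {within D, continuous g} -> {within D, continuous (r \o g)}.
Proof. move=> hr hg x. exact: (continuous_comp (hg x) (hr _)). Qed.

Lemma path_r {R : realType} {X : topologicalType} {A B : set X} {r : X -> X} {x} {g : R -> X} :
  retraction A r -> path_in B x g -> path_in A (r x) (r \o g).
Proof.
move=> [hr [hA _]] [h0 [hc _]]; split; first by rewrite /= h0.
split; first exact: wc.
by move=> t _; apply: hA.
Qed.

Lemma path_T {R : realType} {X : topologicalType} {A : set X} {x} {g : R -> X} :
  path_in A x g -> path_in setT x g.
Proof. by move=> [h0 [hc _]]; split. Qed.

Theorem mainTheorem6 (R : realType) (X : topologicalType) (A : set X)
  (r : X -> X) (m l : X) :
  retraction A r -> A m ->
  (man_wins R A m (r l) -> man_wins R setT m l) /\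
  (lion_wins R setT m l -> lion_wins R A m (r l)).
Proof.
move=> hret Am; have [hr [hA hid]] := hret; split.
- move=> [S [HS1 [HS2 HS3]]].
  exists (fun b => S (r \o b)); split; [|split].
  + move=> b hb; apply: path_T; apply: HS1; exact: path_r hret hb.
  + move=> b hb t t0 E.
    have hb' := path_r hret hb.
    have [_ [_ HA]] := HS1 _ hb'.
    apply: (HS2 _ hb' t t0); rewrite /= -E hid //; exact: HA.
  + move=> b b' t hb hb' t0 E s s0 st.
    apply: (HS3 _ _ t (path_r hret hb) (path_r hret hb') t0) => // u u0 ut.
    by rewrite /= E.
- move=> [S [HS1 [HS2 HS3]]].
  exists (fun a => r \o S a); split; [|split].
  + move=> a ha; apply: path_r hret _; apply: HS1; exact: path_T ha.
  + move=> a ha; have [t [t0 E]] := HS2 _ (path_T ha).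
    exists t; split => //; rewrite /= E hid //.
    by have [_ [_ HA]] := ha; exact: HA.
  + move=> b b' t hb hb' t0 E s s0 st.
    by rewrite /= (HS3 _ _ t (path_T hb) (path_T hb') t0 E s s0 st).
Qed.
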